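(* Suppose $\vdash t:\exists\alpha A$ in the system $\mathsf{HA}+\mathsf{EM}_1^-$, where $t$ and $\exists\alpha A$ are closed. Then there exist a numeral $n$ and a term $u$ such that $\vdash u:A[n/\alpha]$.
   Context: $\mathsf{HA}+\mathsf{EM}_1^-$ is the Curry–Howard proof-term system for intuitionistic (Heyting) arithmetic over the language $\mathcal{L}$ ($0,\mathsf{S},+,\cdot,=$; atomic formulas are decidable and $\mathsf{P}^\bot$ denotes the complementary atomic predicate of $\mathsf{P}$): natural deduction rules for $\wedge,\to,\vee,\forall,\exists$ with the usual proof terms, an induction rule, Post rules for atomic formulas, hypothesis terms $\mathsf{H}_a^{\forall\alpha\mathsf{P}}:\forall\alpha\mathsf{P}$ (for $a:\forall\alpha\mathsf{P}$ in the context) and $\mathsf{W}_a^{\exists\alpha\mathsf{P}^\bot}:\exists\alpha\mathsf{P}^\bot$ (for $a:\exists\alpha\mathsf{P}^\bot$ in the context), and the rule $\mathsf{EM}_1^-$: from $\Gamma,a:\forall\alpha\mathsf{P}\vdash u:\exists\beta C$ and $\Gamma,a:\exists\alpha\mathsf{P}^\bot\vdash v:\exists\beta C$, with $\mathsf{P}$ and $C$ atomic, infer $\Gamma\vdash\mathsf{E}_a(u,v):\exists\beta C$. $\vdash t:A$ means $t$ is a proof term of $A$ in the empty context; a numeral is a term $\mathsf{S}^k0$. *)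

(* Defs.v *)
From Stdlib Require Import List Arith.
Import ListNotations.

Inductive term : Type :=
| TVar  : nat -> term
| TZero : term
| TSucc : term -> term
| TPlus : term -> term -> term
| TMult : term -> term -> term.

Fixpoint tsubst (s : nat -> term) (t : term) : term :=
  match t with
  | TVar n => s n
  | TZero => TZero
  | TSucc t1 => TSucc (tsubst s t1)
  | TPlus t1 t2 => TPlus (tsubst s t1) (tsubst s t2)
  | TMult t1 t2 => TMult (tsubst s t1) (tsubst s t2)
  end.

Definition tshift (t : term) : term := tsubst (fun k => TVar (S k)) t.

Definition up (s : nat -> term) : nat -> term :=
  fun n => match n with 0 => TVar 0 | S k => tshift (s k) end.

Fixpoint teval (rho : nat -> nat) (t : term) : nat :=
  match t with
  | TVar n => rho n
  | TZero => 0
  | TSucc t1 => S (teval rho t1)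
  | TPlus t1 t2 => teval rho t1 + teval rho t2
  | TMult t1 t2 => teval rho t1 * teval rho t2
  end.

Definition num (k : nat) : term := Nat.iter k TSucc TZero.

Inductive atom : Type :=
| AEq  : term -> term -> atom
| ANeq : term -> term -> atom.

Definition acompl (P : atom) : atom :=
  match P with AEq s t => ANeq s t | ANeq s t => AEq s t end.

Definition asubst (s : nat -> term) (P : atom) : atom :=
  match P with
  | AEq a b => AEq (tsubst s a) (tsubst s b)
  | ANeq a b => ANeq (tsubst s a) (tsubst s b)
  end.

Definition atrue (rho : nat -> nat) (P : atom) : Prop :=
  match P with
  | AEq a b => teval rho a = teval rho b
  | ANeq a b => teval rho a <> teval rho b
  end.

Inductive form : Type :=
| FAtom : atom -> form
| FAnd  : form -> form -> form
| FOr   : form -> form -> form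
| FImp  : form -> form -> form
| FAll  : form -> form
| FEx   : form -> form.

Fixpoint fsubst (s : nat -> term) (A : form) : form :=
  match A with
  | FAtom P => FAtom (asubst s P)
  | FAnd A1 A2 => FAnd (fsubst s A1) (fsubst s A2)
  | FOr A1 A2 => FOr (fsubst s A1) (fsubst s A2)
  | FImp A1 A2 => FImp (fsubst s A1) (fsubst s A2)
  | FAll B => FAll (fsubst (up s) B)
  | FEx B => FEx (fsubst (up s) B)
  end.

Definition fshift (A : form) : form := fsubst (fun k => TVar (S k)) A.

(* A[m/alpha], alpha being de Bruijn index 0 *)
Definition inst (m : term) (A : form) : form :=
  fsubst (fun n => match n with 0 => m | S k => TVar k end) A.

(* A[S alpha / alpha] (alpha = index 0, other variables unchanged) *)
Definition succ_inst (A : form) : form :=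
  fsubst (fun n => match n with 0 => TSucc (TVar 0) | k => TVar k end) A.

Fixpoint tclosed (d : nat) (t : term) : Prop :=
  match t with
  | TVar n => n < d
  | TZero => True
  | TSucc t1 => tclosed d t1
  | TPlus t1 t2 | TMult t1 t2 => tclosed d t1 /\ tclosed d t2
  end.

Definition aclosed (d : nat) (P : atom) : Prop :=
  match P with AEq a b | ANeq a b => tclosed d a /\ tclosed d b end.

Fixpoint fclosed (d : nat) (A : form) : Prop :=
  match A with
  | FAtom P => aclosed d P
  | FAnd A1 A2 | FOr A1 A2 | FImp A1 A2 => fclosed d A1 /\ fclosed d A2
  | FAll B | FEx B => fclosed (S d) B
  end.

(* ---------- Proof terms (Curry style; proof variables are names : nat) ---------- *)
Inductive pterm : Type :=
| PVar   : nat -> pterm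
| PHyp   : nat -> pterm
| PWit   : nat -> pterm
| PPair  : pterm -> pterm -> pterm
| PProj1 : pterm -> pterm
| PProj2 : pterm -> pterm
| PInl   : pterm -> pterm
| PInr   : pterm -> pterm
| PCase  : pterm -> nat -> pterm -> nat -> pterm -> pterm
| PLam   : nat -> pterm -> pterm
| PApp   : pterm -> pterm -> pterm
| PTLam  : pterm -> pterm
| PTApp  : pterm -> term -> pterm
| PTPair : term -> pterm -> pterm
| PTCase : pterm -> nat -> pterm -> pterm
| PInd   : pterm -> pterm -> term -> pterm
| PPost  : list pterm -> pterm
| PEM    : nat -> pterm -> pterm -> pterm.

Fixpoint pclosed (d : nat) (t : pterm) : Prop :=
  match t with
  | PVar _ | PHyp _ | PWit _ => True
  | PPair u v | PApp u v | PEM _ u v => pclosed d u /\ pclosed d v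
  | PProj1 u | PProj2 u | PInl u | PInr u | PLam _ u => pclosed d u
  | PCase u _ v _ w => pclosed d u /\ pclosed d v /\ pclosed d w
  | PTLam u => pclosed (S d) u
  | PTApp u m => pclosed d u /\ tclosed d m
  | PTPair m u => tclosed d m /\ pclosed d u
  | PTCase u _ v => pclosed d u /\ pclosed (S d) v
  | PInd u v m => pclosed d u /\ pclosed d v /\ tclosed d m
  | PPost us => (fix go (l : list pterm) : Prop :=
                   match l with [] => True | u :: l' => pclosed d u /\ go l' end) us
  end.

Definition ctx := list (nat * form).

Fixpoint lookup (G : ctx) (x : nat) : option form :=
  match G with
  | [] => None
  | (y, A) :: G' => if Nat.eqb x y then Some A else lookup G' x
  end.

Definition ctx_shift (G : ctx) : ctx := map (fun p => (fst p, fshift (snd p))) G.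

Definition post_valid (Ps : list atom) (P : atom) : Prop :=
  forall rho : nat -> nat, Forall (atrue rho) Ps -> atrue rho P.

Inductive typ : ctx -> pterm -> form -> Prop :=
| ty_var : forall G x A, lookup G x = Some A -> typ G (PVar x) A
| ty_hyp : forall G a P, lookup G a = Some (FAll (FAtom P)) ->
    typ G (PHyp a) (FAll (FAtom P))
| ty_wit : forall G a P, lookup G a = Some (FEx (FAtom P)) ->
    typ G (PWit a) (FEx (FAtom P))
| ty_pair : forall G u v A B, typ G u A -> typ G v B -> typ G (PPair u v) (FAnd A B)
| ty_proj1 : forall G u A B, typ G u (FAnd A B) -> typ G (PProj1 u) A
| ty_proj2 : forall G u A B, typ G u (FAnd A B) -> typ G (PProj2 u) B
| ty_inl : forall G u A B, typ G u A -> typ G (PInl u) (FOr A B)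
| ty_inr : forall G u A B, typ G u B -> typ G (PInr u) (FOr A B)
| ty_case : forall G u x v y w A B C,
    typ G u (FOr A B) -> typ ((x, A) :: G) v C -> typ ((y, B) :: G) w C ->
    typ G (PCase u x v y w) C
| ty_lam : forall G x u A B, typ ((x, A) :: G) u B -> typ G (PLam x u) (FImp A B)
| ty_app : forall G u v A B, typ G u (FImp A B) -> typ G v A -> typ G (PApp u v) B
| ty_tlam : forall G u A, typ (ctx_shift G) u A -> typ G (PTLam u) (FAll A)
| ty_tapp : forall G u m A, typ G u (FAll A) -> typ G (PTApp u m) (inst m A)
| ty_tpair : forall G m u A, typ G u (inst m A) -> typ G (PTPair m u) (FEx A)
| ty_tcase : forall G u x v A C,
    typ G u (FEx A) -> typ ((x, A) :: ctx_shift G) v (fshift C) ->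
    typ G (PTCase u x v) C
| ty_ind : forall G u v m A,
    typ G u (inst TZero A) -> typ G v (FAll (FImp A (succ_inst A))) ->
    typ G (PInd u v m) (inst m A)
| ty_post : forall G us Ps P,
    Forall2 (fun u Q => typ G u (FAtom Q)) us Ps -> post_valid Ps P ->
    typ G (PPost us) (FAtom P)
| ty_em : forall G a u v P C,
    typ ((a, FAll (FAtom P)) :: G) u (FEx (FAtom C)) ->
    typ ((a, FEx (FAtom (acompl P))) :: G) v (FEx (FAtom C)) ->
    typ G (PEM a u v) (FEx (FAtom C)).

(* Main.v *)
Require Import Defs.
From Stdlib Require Import List Arith Lia FunctionalExtensionality Classical Setoid.
Import ListNotations.

Notation shs := (fun k => TVar (S k)).
Definition isub (m : term) : nat -> term := fun n => match n with 0 => m | S k => TVar k end.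

Lemma tsubst_comp : forall t s1 s2, tsubst s2 (tsubst s1 t) = tsubst (fun i => tsubst s2 (s1 i)) t.
Proof. induction t; intros; simpl; f_equal; auto. Qed.

Lemma tsubst_id_ext : forall t s, (forall i, s i = TVar i) -> tsubst s t = t.
Proof. induction t; intros; simpl; f_equal; auto. Qed.

Lemma up_comp : forall s1 s2 i, tsubst (up s2) (up s1 i) = up (fun j => tsubst s2 (s1 j)) i.
Proof. intros s1 s2 [|k]; simpl. reflexivity. unfold tshift. rewrite !tsubst_comp. reflexivity. Qed.

Lemma fsubst_comp : forall A s1 s2, fsubst s2 (fsubst s1 A) = fsubst (fun i => tsubst s2 (s1 i)) A.
Proof.
  induction A; intros; simpl; try (f_equal; auto; fail).
  - destruct a; simpl; rewrite !tsubst_comp; reflexivity.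
  - rewrite IHA. f_equal. f_equal. extensionality i. apply up_comp.
  - rewrite IHA. f_equal. f_equal. extensionality i. apply up_comp.
Qed.

Lemma fsubst_id_ext : forall A s, (forall i, s i = TVar i) -> fsubst s A = A.
Proof.
  induction A; intros; simpl; try (f_equal; auto; fail).
  - destruct a; simpl; rewrite !tsubst_id_ext; auto.
  - f_equal; apply IHA. intros [|i]; simpl; auto. rewrite H. reflexivity.
  - f_equal; apply IHA. intros [|i]; simpl; auto. rewrite H. reflexivity.
Qed.

Lemma teval_subst : forall t rho s, teval rho (tsubst s t) = teval (fun i => teval rho (s i)) t.
Proof. induction t; intros; simpl; auto. Qed.

Lemma num_S : forall n, num (S n) = TSucc (num n).
Proof. reflexivity. Qed.

Lemma teval_num : forall rho n, teval rho (num n) = n.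
Proof. induction n; simpl; auto. Qed.

Lemma tsubst_num : forall s n, tsubst s (num n) = num n.
Proof. induction n; simpl; auto. rewrite IHn. reflexivity. Qed.

Lemma teval_close : forall t env rho, teval env (tsubst (fun j => num (rho j)) t) = teval rho t.
Proof. induction t; intros; simpl; auto. apply teval_num. Qed.

Lemma atrue_subst : forall P rho s, atrue rho (asubst s P) <-> atrue (fun i => teval rho (s i)) P.
Proof. destruct P; intros; simpl; rewrite !teval_subst; tauto. Qed.

Lemma asubst_acompl : forall s P, asubst s (acompl P) = acompl (asubst s P).
Proof. destruct P; reflexivity. Qed.

Lemma fsubst_up_shift : forall s B, fsubst (up s) (fshift B) = fshift (fsubst s B).
Proof. intros. unfold fshift. rewrite !fsubst_comp. reflexivity. Qed.

Lemma fsubst_inst : forall s m A, fsubst s (inst m A) = inst (tsubst s m) (fsubst (up s) A).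
Proof.
  intros. unfold inst. rewrite !fsubst_comp. f_equal. extensionality i. destruct i; simpl. reflexivity.
  unfold tshift. rewrite tsubst_comp. simpl. symmetry. apply tsubst_id_ext. reflexivity.
Qed.

Lemma fsubst_succ_inst : forall s A, fsubst (up s) (succ_inst A) = succ_inst (fsubst (up s) A).
Proof.
  intros. unfold succ_inst. rewrite !fsubst_comp. f_equal. extensionality i. destruct i; simpl. reflexivity.
  unfold tshift. rewrite tsubst_comp. reflexivity.
Qed.

Lemma inst0_up_shs : forall B, inst (TVar 0) (fsubst (up shs) B) = B.
Proof. intros. unfold inst. rewrite fsubst_comp. apply fsubst_id_ext. intros [|i]; reflexivity. Qed.

Lemma tsubst_closed : forall t d s1 s2, tclosed d t -> (forall i, i < d -> s1 i = s2 i) -> tsubst s1 t = tsubst s2 t.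
Proof. induction t; intros; simpl in *; intuition; f_equal; eauto. Qed.

Lemma fsubst_closed : forall A d s1 s2, fclosed d A -> (forall i, i < d -> s1 i = s2 i) -> fsubst s1 A = fsubst s2 A.
Proof.
  induction A; intros; simpl in *; intuition; try (f_equal; eauto; fail).
  - destruct a; simpl in *; intuition; f_equal; f_equal; eapply tsubst_closed; eauto.
  - f_equal; eapply IHA; eauto. intros [|i] Hi; simpl; auto. f_equal. apply H0. lia.
  - f_equal; eapply IHA; eauto. intros [|i] Hi; simpl; auto. f_equal. apply H0. lia.
Qed.
Definition cmap (s : nat -> term) (G : ctx) : ctx := map (fun p => (fst p, fsubst s (snd p))) G.

Lemma ctx_shift_cmap : forall G, ctx_shift G = cmap shs G.
Proof. reflexivity. Qed.

Lemma lookup_cmap : forall s G x, lookup (cmap s G) x = option_map (fsubst s) (lookup G x).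
Proof. induction G as [|[y B] G IH]; intros; simpl; auto. destruct (Nat.eqb x y); auto. Qed.

Lemma cmap_up_shift : forall s G, cmap (up s) (ctx_shift G) = ctx_shift (cmap s G).
Proof.
  intros. unfold ctx_shift, cmap. rewrite !map_map. apply map_ext. intros [y B]. cbn [fst snd].
  f_equal. apply fsubst_up_shift.
Qed.

Definition incl' (G G' : ctx) := forall y B, lookup G y = Some B -> lookup G' y = Some B.

Lemma incl_cons : forall G G' x A, incl' G G' -> incl' ((x,A)::G) ((x,A)::G').
Proof. unfold incl'; simpl; intros. destruct (Nat.eqb y x); auto. Qed.

Lemma incl_cmap : forall s G G', incl' G G' -> incl' (cmap s G) (cmap s G').
Proof.
  unfold incl'; intros. rewrite lookup_cmap in *. destruct (lookup G y) eqn:E; simpl in H0; try discriminate.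
  rewrite (H _ _ E). exact H0.
Qed.

Lemma weaken : forall G t A, typ G t A -> forall G', incl' G G' -> typ G' t A.
Proof.
  fix IH 4. intros G t A H G' Hi. destruct H.
  - constructor; auto.
  - constructor; auto.
  - constructor; auto.
  - econstructor; eauto.
  - econstructor; eauto.
  - econstructor; eauto.
  - econstructor; eauto.
  - econstructor; eauto.
  - econstructor; [eapply IH; eauto | eapply IH; [eassumption| apply incl_cons; auto] | eapply IH; [eassumption| apply incl_cons; auto]].
  - econstructor; eapply IH; [eassumption| apply incl_cons; auto].
  - econstructor; eauto.
  - econstructor; eapply IH; [eassumption| rewrite !ctx_shift_cmap; apply incl_cmap; auto].
  - econstructor; eauto.
  - econstructor; eauto.
  - econstructor; [eapply IH; eauto | eapply IH; [eassumption| apply incl_cons; rewrite !ctx_shift_cmap; apply incl_cmap; auto]].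
  - econstructor; eauto.
  - econstructor; [| eassumption]. clear H0. induction H; constructor; eauto.
  - econstructor; eapply IH; [eassumption| apply incl_cons; auto | eassumption | apply incl_cons; auto].
Qed.

Lemma subst1 : forall G t A, typ G t A -> forall s, exists t', typ (cmap s G) t' (fsubst s A).
Proof.
  fix IH 4. intros G t A H s. destruct H.
  - exists (PVar x). constructor. rewrite lookup_cmap, H. reflexivity.
  - exists (PHyp a). simpl. constructor. rewrite lookup_cmap, H. reflexivity.
  - exists (PWit a). simpl. constructor. rewrite lookup_cmap, H. reflexivity.
  - destruct (IH _ _ _ H s) as [u' Hu]; destruct (IH _ _ _ H0 s) as [v' Hv].
    exists (PPair u' v'); simpl; constructor; auto.
  - destruct (IH _ _ _ H s) as [u' Hu]. exists (PProj1 u'). econstructor; eauto.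
  - destruct (IH _ _ _ H s) as [u' Hu]. exists (PProj2 u'). econstructor; eauto.
  - destruct (IH _ _ _ H s) as [u' Hu]. exists (PInl u'). econstructor; eauto.
  - destruct (IH _ _ _ H s) as [u' Hu]. exists (PInr u'). econstructor; eauto.
  - destruct (IH _ _ _ H s) as [u' Hu]; destruct (IH _ _ _ H0 s) as [v' Hv];
    destruct (IH _ _ _ H1 s) as [w' Hw].
    exists (PCase u' x v' y w'). econstructor; eauto.
  - destruct (IH _ _ _ H s) as [u' Hu]. exists (PLam x u'). econstructor; eauto.
  - destruct (IH _ _ _ H s) as [u' Hu]; destruct (IH _ _ _ H0 s) as [v' Hv].
    exists (PApp u' v'). econstructor; eauto.
  - destruct (IH _ _ _ H (up s)) as [u' Hu]. rewrite cmap_up_shift in Hu.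
    exists (PTLam u'). simpl. constructor. auto.
  - destruct (IH _ _ _ H s) as [u' Hu]. exists (PTApp u' (tsubst s m)).
    rewrite fsubst_inst. constructor. auto.
  - destruct (IH _ _ _ H s) as [u' Hu]. rewrite fsubst_inst in Hu.
    exists (PTPair (tsubst s m) u'). simpl. constructor. auto.
  - destruct (IH _ _ _ H s) as [u' Hu]; destruct (IH _ _ _ H0 (up s)) as [v' Hv].
    simpl in Hv. rewrite cmap_up_shift, fsubst_up_shift in Hv.
    exists (PTCase u' x v'). econstructor; eauto.
  - destruct (IH _ _ _ H s) as [u' Hu]; destruct (IH _ _ _ H0 s) as [v' Hv].
    rewrite fsubst_inst in Hu. simpl in Hv. rewrite fsubst_succ_inst in Hv.
    exists (PInd u' v' (tsubst s m)). rewrite fsubst_inst. constructor; auto.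
  - assert (exists us', Forall2 (fun u Q => typ (cmap s G) u (FAtom Q)) us' (map (asubst s) Ps)) as [us' Hus].
    { clear H0. induction H as [|u Q us Ps Hu Hrest IHrest]. exists []; constructor.
      destruct IHrest as [us' Hus']. destruct (IH _ _ _ Hu s) as [u' Hu'].
      exists (u'::us'); constructor; auto. }
    exists (PPost us'). simpl. econstructor; eauto.
    intros rho HF. apply atrue_subst. apply H0. clear -HF. induction Ps; simpl in *; inversion HF; subst; constructor; auto.
    apply atrue_subst; auto.
  - destruct (IH _ _ _ H s) as [u' Hu]; destruct (IH _ _ _ H0 s) as [v' Hv].
    simpl in Hu, Hv. rewrite asubst_acompl in Hv.
    exists (PEM a u' v'). simpl. econstructor; eauto.
Qed.
Fixpoint fresh (G : ctx) : nat := match G with [] => 0 | (y,_)::G' => S (Nat.max y (fresh G')) end.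

Lemma lookup_lt : forall G y B, lookup G y = Some B -> y < fresh G.
Proof.
  induction G as [|[z C] G IH]; simpl; intros; [discriminate|].
  destruct (Nat.eqb y z) eqn:E. apply Nat.eqb_eq in E; lia. specialize (IH _ _ H); lia.
Qed.

Lemma incl_fresh : forall G C, incl' G ((fresh G, C)::G).
Proof.
  unfold incl'; intros; simpl. destruct (Nat.eqb y (fresh G)) eqn:E; auto.
  apply Nat.eqb_eq in E. apply lookup_lt in H. lia.
Qed.

Definition asg s G G' := forall y B, lookup G y = Some B -> exists p, typ G' p (fsubst s B).

Lemma asg_cons : forall s G G' x A, asg s G G' -> asg s ((x,A)::G) ((fresh G', fsubst s A)::G').
Proof.
  unfold asg; intros. simpl in H0. destruct (Nat.eqb y x) eqn:E.
  - inversion H0; subst. exists (PVar (fresh G')). constructor. simpl. rewrite Nat.eqb_refl. reflexivity.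
  - destruct (H _ _ H0) as [p Hp]. exists p. eapply weaken; [exact Hp|]. apply incl_fresh.
Qed.

Lemma asg_shift : forall s G G', asg s G G' -> asg (up s) (ctx_shift G) (ctx_shift G').
Proof.
  unfold asg; intros. rewrite ctx_shift_cmap, lookup_cmap in H0.
  destruct (lookup G y) eqn:E; simpl in H0; inversion H0; subst.
  destruct (H _ _ E) as [p Hp]. destruct (subst1 _ _ _ Hp shs) as [p' Hp'].
  exists p'. rewrite fsubst_up_shift. exact Hp'.
Qed.

Lemma subst2 : forall G t A, typ G t A -> forall s G', asg s G G' -> exists t', typ G' t' (fsubst s A).
Proof.
  fix IH 4. intros G t A H s G' Ha. destruct H.
  - exact (Ha _ _ H).
  - exact (Ha _ _ H).
  - exact (Ha _ _ H).
  - destruct (IH _ _ _ H s _ Ha) as [u' Hu]; destruct (IH _ _ _ H0 s _ Ha) as [v' Hv].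
    exists (PPair u' v'); simpl; constructor; auto.
  - destruct (IH _ _ _ H s _ Ha) as [u' Hu]. exists (PProj1 u'). econstructor; eauto.
  - destruct (IH _ _ _ H s _ Ha) as [u' Hu]. exists (PProj2 u'). econstructor; eauto.
  - destruct (IH _ _ _ H s _ Ha) as [u' Hu]. exists (PInl u'). econstructor; eauto.
  - destruct (IH _ _ _ H s _ Ha) as [u' Hu]. exists (PInr u'). econstructor; eauto.
  - destruct (IH _ _ _ H s _ Ha) as [u' Hu];
    destruct (IH _ _ _ H0 s _ (asg_cons _ _ _ x A Ha)) as [v' Hv];
    destruct (IH _ _ _ H1 s _ (asg_cons _ _ _ y B Ha)) as [w' Hw].
    exists (PCase u' (fresh G') v' (fresh G') w'). econstructor; eauto.
  - destruct (IH _ _ _ H s _ (asg_cons _ _ _ x A Ha)) as [u' Hu]. exists (PLam (fresh G') u'). econstructor; eauto.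
  - destruct (IH _ _ _ H s _ Ha) as [u' Hu]; destruct (IH _ _ _ H0 s _ Ha) as [v' Hv].
    exists (PApp u' v'). econstructor; eauto.
  - destruct (IH _ _ _ H (up s) _ (asg_shift _ _ _ Ha)) as [u' Hu].
    exists (PTLam u'). simpl. constructor. auto.
  - destruct (IH _ _ _ H s _ Ha) as [u' Hu]. exists (PTApp u' (tsubst s m)).
    rewrite fsubst_inst. constructor. auto.
  - destruct (IH _ _ _ H s _ Ha) as [u' Hu]. rewrite fsubst_inst in Hu.
    exists (PTPair (tsubst s m) u'). simpl. constructor. auto.
  - destruct (IH _ _ _ H s _ Ha) as [u' Hu];
    destruct (IH _ _ _ H0 (up s) _ (asg_cons _ _ _ x A (asg_shift _ _ _ Ha))) as [v' Hv].
    rewrite fsubst_up_shift in Hv.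
    exists (PTCase u' (fresh (ctx_shift G')) v'). econstructor; eauto.
  - destruct (IH _ _ _ H s _ Ha) as [u' Hu]; destruct (IH _ _ _ H0 s _ Ha) as [v' Hv].
    rewrite fsubst_inst in Hu. simpl in Hv. rewrite fsubst_succ_inst in Hv.
    exists (PInd u' v' (tsubst s m)). rewrite fsubst_inst. constructor; auto.
  - assert (exists us', Forall2 (fun u Q => typ G' u (FAtom Q)) us' (map (asubst s) Ps)) as [us' Hus].
    { clear H0. induction H as [|u Q us Ps Hu Hrest IHrest]. exists []; constructor.
      destruct IHrest as [us' Hus']. destruct (IH _ _ _ Hu s _ Ha) as [u' Hu'].
      exists (u'::us'); constructor; auto. }
    exists (PPost us'). simpl. econstructor; eauto.
    intros rho HF. apply atrue_subst. apply H0. clear -HF. induction Ps; simpl in *; inversion HF; subst; constructor; auto.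
    apply atrue_subst; auto.
  - destruct (IH _ _ _ H s _ (asg_cons _ _ _ a _ Ha)) as [u' Hu];
    destruct (IH _ _ _ H0 s _ (asg_cons _ _ _ a _ Ha)) as [v' Hv].
    simpl in Hu, Hv. rewrite asubst_acompl in Hv.
    exists (PEM (fresh G') u' v'). simpl. econstructor; eauto.
Qed.

Definition sequiv (s1 s2 : nat -> term) := forall i env, teval env (s1 i) = teval env (s2 i).

Lemma sequiv_up : forall s1 s2, sequiv s1 s2 -> sequiv (up s1) (up s2).
Proof. intros s1 s2 H [|i] env; simpl; [reflexivity| unfold tshift; rewrite !teval_subst; apply H]. Qed.

Lemma sequiv_sym : forall s1 s2, sequiv s1 s2 -> sequiv s2 s1.
Proof. unfold sequiv; intros; symmetry; auto. Qed.

Lemma Leib : forall A s1 s2, sequiv s1 s2 -> forall G, exists f, typ G f (FImp (fsubst s1 A) (fsubst s2 A)).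
Proof.
  induction A; intros s1 s2 Hs G.
  - exists (PLam 0 (PPost [PVar 0])). simpl. constructor. apply ty_post with (Ps := [asubst s1 a]).
    + constructor; [constructor; reflexivity| constructor].
    + intros env HF. inversion HF as [|? ? HP]; subst. rewrite atrue_subst in *.
      assert (E: (fun i => teval env (s2 i)) = (fun i => teval env (s1 i))) by (extensionality i; symmetry; apply Hs).
      rewrite E; auto.
  - destruct (IHA1 s1 s2 Hs ((0, FAnd (fsubst s1 A1) (fsubst s1 A2))::G)) as [f1 H1].
    destruct (IHA2 s1 s2 Hs ((0, FAnd (fsubst s1 A1) (fsubst s1 A2))::G)) as [f2 H2].
    exists (PLam 0 (PPair (PApp f1 (PProj1 (PVar 0))) (PApp f2 (PProj2 (PVar 0))))).
    simpl. constructor. constructor; eapply ty_app; eauto; econstructor; constructor; reflexivity.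
  - set (G0 := (0, FOr (fsubst s1 A1) (fsubst s1 A2))::G).
    destruct (IHA1 s1 s2 Hs ((1, fsubst s1 A1)::G0)) as [f1 H1].
    destruct (IHA2 s1 s2 Hs ((1, fsubst s1 A2)::G0)) as [f2 H2].
    exists (PLam 0 (PCase (PVar 0) 1 (PInl (PApp f1 (PVar 1))) 1 (PInr (PApp f2 (PVar 1))))).
    simpl. constructor. eapply ty_case; [constructor; reflexivity| |].
    + constructor. eapply ty_app; [exact H1| constructor; reflexivity].
    + constructor. eapply ty_app; [exact H2| constructor; reflexivity].
  - set (G1 := (1, fsubst s2 A1)::(0, FImp (fsubst s1 A1) (fsubst s1 A2))::G).
    destruct (IHA1 s2 s1 (sequiv_sym _ _ Hs) G1) as [f1 H1].
    destruct (IHA2 s1 s2 Hs G1) as [f2 H2].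
    exists (PLam 0 (PLam 1 (PApp f2 (PApp (PVar 0) (PApp f1 (PVar 1)))))).
    simpl. constructor. constructor. eapply ty_app; [exact H2|].
    eapply ty_app; [constructor; reflexivity|]. eapply ty_app; [exact H1| constructor; reflexivity].
  - set (G0 := (0, FAll (fsubst (up s1) A))::G).
    destruct (IHA (up s1) (up s2) (sequiv_up _ _ Hs) (ctx_shift G0)) as [f Hf].
    exists (PLam 0 (PTLam (PApp f (PTApp (PVar 0) (TVar 0))))).
    simpl. constructor. constructor. eapply ty_app; [exact Hf|].
    assert (Ht : typ (ctx_shift G0) (PTApp (PVar 0) (TVar 0)) (inst (TVar 0) (fsubst (up shs) (fsubst (up s1) A))))
      by (apply ty_tapp; constructor; reflexivity).
    rewrite inst0_up_shs in Ht. exact Ht.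
  - set (G0 := (0, FEx (fsubst (up s1) A))::G).
    destruct (IHA (up s1) (up s2) (sequiv_up _ _ Hs) ((1, fsubst (up s1) A) :: ctx_shift G0)) as [f Hf].
    exists (PLam 0 (PTCase (PVar 0) 1 (PTPair (TVar 0) (PApp f (PVar 1))))).
    simpl. constructor. eapply ty_tcase; [constructor; reflexivity|].
    change (fshift (FEx (fsubst (up s2) A))) with (FEx (fsubst (up shs) (fsubst (up s2) A))).
    apply ty_tpair. rewrite inst0_up_shs. eapply ty_app; [exact Hf| constructor; reflexivity].
Qed.

Definition Pv (A : form) := exists u, typ nil u A.
Definition close (rho : nat -> nat) (A : form) := fsubst (fun i => num (rho i)) A.
Definition scons (n : nat) (rho : nat -> nat) : nat -> nat := fun i => match i with 0 => n | S k => rho k end.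

Lemma PvL : forall A s1 s2, sequiv s1 s2 -> Pv (fsubst s1 A) -> Pv (fsubst s2 A).
Proof. intros A s1 s2 Hs [u Hu]. destruct (Leib A s1 s2 Hs nil) as [f Hf]. exists (PApp f u). econstructor; eauto. Qed.

Lemma Pv_close_subst : forall rho s A, Pv (close rho (fsubst s A)) <-> Pv (close (fun i => teval rho (s i)) A).
Proof.
  intros. unfold close. rewrite fsubst_comp. split; apply PvL; intros i env;
  rewrite teval_close, teval_num; reflexivity.
Qed.

Fixpoint R (rho : nat -> nat) (A : form) : Prop :=
  match A with
  | FAtom P => atrue rho P
  | FAnd A B => R rho A /\ R rho B
  | FOr A B => (R rho A /\ Pv (close rho A)) \/ (R rho B /\ Pv (close rho B))
  | FImp A B => (R rho A /\ Pv (close rho A)) -> R rho B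
  | FAll A => forall n, R (scons n rho) A
  | FEx A => exists n, R (scons n rho) A /\ Pv (close (scons n rho) A)
  end.

Lemma scons_up : forall n rho s, (fun i => teval (scons n rho) (up s i)) = scons n (fun i => teval rho (s i)).
Proof. intros. extensionality i. destruct i; simpl; [reflexivity| unfold tshift; rewrite teval_subst; reflexivity]. Qed.

Lemma R_subst : forall A rho s, R rho (fsubst s A) <-> R (fun i => teval rho (s i)) A.
Proof.
  induction A; intros; simpl.
  - apply atrue_subst.
  - rewrite IHA1, IHA2. tauto.
  - rewrite IHA1, IHA2, !Pv_close_subst. tauto.
  - rewrite IHA1, IHA2, !Pv_close_subst. tauto.
  - split; intros H n; specialize (H n); rewrite IHA, scons_up in *; auto.
  - split; intros [n [H1 H2]]; exists n; rewrite IHA, Pv_close_subst, scons_up in *; auto.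
Qed.
Definition hypsR rho G := forall y B, lookup G y = Some B -> R rho B /\ Pv (close rho B).

Lemma PvU : forall G t A rho, typ G t A -> hypsR rho G -> Pv (close rho A).
Proof.
  intros. destruct (subst2 _ _ _ H (fun i => num (rho i)) nil) as [u Hu].
  - intros y B Hl. apply H0 in Hl. destruct Hl as [_ [p Hp]]. exists p; exact Hp.
  - exists u; exact Hu.
Qed.

Lemma hypsR_cons : forall rho G x A, hypsR rho G -> R rho A -> Pv (close rho A) -> hypsR rho ((x,A)::G).
Proof. unfold hypsR; simpl; intros. destruct (Nat.eqb y x). inversion H2; subst; split; auto. exact (H _ _ H2). Qed.

Lemma R_shift : forall n rho B, R (scons n rho) (fshift B) <-> R rho B.
Proof. intros. unfold fshift. rewrite R_subst. reflexivity. Qed.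

Lemma close_shift : forall n rho B, close (scons n rho) (fshift B) = close rho B.
Proof. intros. unfold close, fshift. rewrite fsubst_comp. reflexivity. Qed.

Lemma hypsR_shift : forall n rho G, hypsR rho G -> hypsR (scons n rho) (ctx_shift G).
Proof.
  unfold hypsR; intros. rewrite ctx_shift_cmap, lookup_cmap in H0.
  destruct (lookup G y) eqn:E; simpl in H0; inversion H0; subst.
  destruct (H _ _ E). change (fsubst shs f) with (fshift f). rewrite R_shift, close_shift. auto.
Qed.

Lemma fn_isub : forall rho m, (fun i => teval rho (isub m i)) = scons (teval rho m) rho.
Proof. intros. extensionality i. destruct i; reflexivity. Qed.

Lemma R_inst : forall rho m A, R rho (inst m A) <-> R (scons (teval rho m) rho) A.
Proof. intros. change (inst m A) with (fsubst (isub m) A). rewrite R_subst, fn_isub. reflexivity. Qed.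

Lemma Pv_inst : forall rho m A, Pv (close rho (inst m A)) <-> Pv (close (scons (teval rho m) rho) A).
Proof. intros. change (inst m A) with (fsubst (isub m) A). rewrite Pv_close_subst, fn_isub. reflexivity. Qed.

Lemma close_up : forall k rho B, inst (num k) (fsubst (up (fun i => num (rho i))) B) = close (scons k rho) B.
Proof.
  intros. unfold inst, close. rewrite fsubst_comp. f_equal. extensionality i. destruct i; simpl. reflexivity.
  unfold tshift. rewrite !tsubst_num. reflexivity.
Qed.

Lemma close_succ : forall k rho A, close (scons k rho) (succ_inst A) = close (scons (S k) rho) A.
Proof. intros. unfold close, succ_inst. rewrite fsubst_comp. f_equal. extensionality i. destruct i; reflexivity. Qed.

Lemma R_succ : forall k rho A, R (scons k rho) (succ_inst A) <-> R (scons (S k) rho) A.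
Proof.
  intros. unfold succ_inst. rewrite R_subst.
  assert (E : (fun i => teval (scons k rho) (match i with 0 => TSucc (TVar 0) | k => TVar k end)) = scons (S k) rho)
    by (extensionality i; destruct i; reflexivity).
  rewrite E. reflexivity.
Qed.

Lemma fn_close : forall (env rho : nat -> nat), (fun i => teval env (num (rho i))) = rho.
Proof. intros. extensionality i. apply teval_num. Qed.

Lemma typ_atom_true : forall rho Q, atrue rho Q -> typ nil (PPost []) (close rho (FAtom Q)).
Proof.
  intros. unfold close. simpl. apply ty_post with (Ps := []). constructor.
  intros env _. apply atrue_subst. rewrite fn_close. auto.
Qed.

Lemma sound : forall G t A, typ G t A -> forall rho, hypsR rho G -> R rho A.
Proof.
  fix IH 4. intros G t A H rho Hh. destruct H.
  - apply (Hh _ _ H).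
  - apply (Hh _ _ H).
  - apply (Hh _ _ H).
  - simpl; split; eauto.
  - apply (IH _ _ _ H rho Hh).
  - apply (IH _ _ _ H rho Hh).
  - simpl. left. split. eauto. eapply PvU; eauto.
  - simpl. right. split. eauto. eapply PvU; eauto.
  - destruct (IH _ _ _ H rho Hh) as [[H2 H3]|[H2 H3]].
    + eapply IH; [exact H0|]. apply hypsR_cons; auto.
    + eapply IH; [exact H1|]. apply hypsR_cons; auto.
  - simpl. intros [H1 H2]. eapply IH; [exact H|]. apply hypsR_cons; auto.
  - exact ((IH _ _ _ H rho Hh) (conj (IH _ _ _ H0 rho Hh) (PvU _ _ _ _ H0 Hh))).
  - simpl. intros n. eapply IH; [exact H|]. apply hypsR_shift; auto.
  - apply R_inst. apply (IH _ _ _ H rho Hh).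
  - simpl. exists (teval rho m). split.
    + apply R_inst. eauto.
    + apply Pv_inst. eapply PvU; eauto.
  - destruct (IH _ _ _ H rho Hh) as [n [H1 H2]].
    apply (R_shift n). eapply IH; [exact H0|]. apply hypsR_cons; auto. apply hypsR_shift; auto.
  - apply R_inst. pose proof (IH _ _ _ H0 rho Hh) as Hstep. simpl in Hstep.
    pose proof (PvU _ _ _ _ H0 Hh) as [w Hw].
    assert (forall k, R (scons k rho) A /\ Pv (close (scons k rho) A)) as Hall.
    { induction k.
      - split. apply R_inst with (m := TZero). eauto.
        apply Pv_inst with (m := TZero). eapply PvU; eauto.
      - destruct IHk as [Hk1 [p Hp]]. split.
        + apply R_succ. apply Hstep. split; auto. exists p; auto.
        + exists (PApp (PTApp w (num k)) p).
          pose proof (ty_tapp _ _ (num k) _ Hw) as Hw'.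
          change (close rho (FAll (FImp A (succ_inst A)))) with
            (FAll (FImp (fsubst (up (fun i => num (rho i))) A) (fsubst (up (fun i => num (rho i))) (succ_inst A)))) in Hw'.
          change (inst (num k) (FImp ?X ?Y)) with (FImp (inst (num k) X) (inst (num k) Y)) in Hw'.
          rewrite !close_up, close_succ in Hw'. econstructor; eauto. }
    apply Hall.
  - simpl. apply H0. clear H0.
    induction H as [|u Q us Ps Hu _ IHl]; constructor; [exact (IH _ _ _ Hu rho Hh) | exact IHl].
  - destruct (classic (forall n, atrue (scons n rho) P)) as [Hall|Hn].
    + eapply IH; [exact H|]. apply hypsR_cons; auto.
      exists (PTLam (PPost [])). unfold close. simpl. constructor. apply ty_post with (Ps := []). constructor.
      intros env _. apply atrue_subst.
      assert (E : (fun i => teval env (up (fun i0 => num (rho i0)) i)) = scons (env 0) rho).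
      { extensionality i. destruct i; simpl; auto. unfold tshift. rewrite tsubst_num, teval_num. reflexivity. }
      rewrite E. auto.
    + apply not_all_ex_not in Hn. destruct Hn as [n Hn].
      assert (Hc : atrue (scons n rho) (acompl P)).
      { destruct P; simpl in *; auto. destruct (Nat.eq_dec (teval (scons n rho) t) (teval (scons n rho) t0)); tauto. }
      eapply IH; [exact H0|]. apply hypsR_cons; auto.
      * exists n. split; auto. exists (PPost []). apply typ_atom_true; auto.
      * exists (PTPair (num n) (PPost [])).
        change (close rho (FEx (FAtom (acompl P)))) with (FEx (fsubst (up (fun i => num (rho i))) (FAtom (acompl P)))).
        constructor. rewrite close_up. apply typ_atom_true; auto.
Qed.

Theorem mainTheorem5 (t : pterm) (A : form) :
  pclosed 0 t -> fclosed 0 (FEx A) -> typ nil t (FEx A) ->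
  exists (k : nat) (u : pterm), typ nil u (inst (num k) A).
Proof.
  intros _ Hc Ht.
  pose proof (sound _ _ _ Ht (fun _ => 0)) as HR.
  destruct HR as [n [_ [u Hu]]].
  - intros y B Hl. discriminate.
  - exists n, u. replace (inst (num n) A) with (close (scons n (fun _ => 0)) A); auto.
    unfold close, inst. eapply fsubst_closed; [exact Hc|]. intros i Hi. destruct i; [reflexivity| lia].
Qed.
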